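(* Assume $|F|>2$. Then $E$ has an asymptotic sequence, i.e. there is a sequence $(A_n)_{n\in\omega}$ of pairwise disjoint asymptotic subsets of $E\setminus\{0\}$.
   Context: $F$ is a countable field and $E$ is a countably infinite-dimensional $F$-vector space. A set $A\subseteq E\setminus\{0\}$ is asymptotic if $V\cap A\neq\emptyset$ for every infinite-dimensional subspace $V$ of $E$. *)

(* Defs.v *)
From HB Require Import structures.
From mathcomp Require Import all_boot all_order all_algebra.
Set Implicit Arguments. Unset Strict Implicit. Unset Printing Implicit Defensive.
Import GRing.Theory.
Local Open Scope ring_scope.

Definition countable_type (T : Type) : Prop := exists f : T -> nat, injective f.

Section Defs.
Variables (F : fieldType) (E : lmodType F).

Definition lin_indep (n : nat) (v : 'I_n -> E) : Prop :=
  forall c : 'I_n -> F, \sum_(i < n) c i *: v i = 0 -> forall i, c i = 0.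

Definition is_subspace (V : E -> Prop) : Prop :=
  [/\ V 0, (forall x y, V x -> V y -> V (x + y)) & (forall (a : F) x, V x -> V (a *: x))].

Definition inf_dim (V : E -> Prop) : Prop :=
  forall n : nat, exists v : 'I_n -> E, (forall i, V (v i)) /\ lin_indep v.

Definition asymptotic (A : E -> Prop) : Prop :=
  (forall x, A x -> x <> 0) /\
  (forall V : E -> Prop, is_subspace V -> inf_dim V -> exists x, V x /\ A x).
End Defs.

(* Main.v *)
Require Import Defs.
From mathcomp Require Import all_boot all_order all_algebra.
From Stdlib Require Import Classical ClassicalEpsilon.
From mathcomp Require Import zify.
Set Implicit Arguments. Unset Strict Implicit. Unset Printing Implicit Defensive.
Import GRing.Theory.
Local Open Scope ring_scope.

Section Coords.
Variables (F : fieldType) (E : lmodType F) (g : nat -> E).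

Definition in_span (m : nat) (y : E) : Prop :=
  exists a : nat -> F, y = \sum_(j < m) a j *: g j.

Definition rep (h : nat -> F) (x : E) : Prop :=
  (forall i, in_span i (g i) -> h i = 0) /\
  exists N, (forall i, (N <= i)%N -> h i = 0) /\ x = \sum_(i < N) h i *: g i.

Lemma sum_ext_bound (h : nat -> F) N N' :
  (forall i, (N <= i)%N -> h i = 0) -> (N <= N')%N ->
  \sum_(i < N') h i *: g i = \sum_(i < N) h i *: g i.
Proof.
move=> hN le; rewrite -(subnKC le).
elim: (N' - N)%N => [|k IH]; first by rewrite addn0.
by rewrite addnS big_ord_recr /= IH hN ?leq_addr // scale0r addr0.
Qed.

Lemma rep_bound h x : rep h x -> forall N, (forall i, (N <= i)%N -> h i = 0) ->
  x = \sum_(i < N) h i *: g i.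
Proof.
move=> [_ [N0 [h0 ->]]] N hN.
case: (leqP N0 N) => le.
  by rewrite (sum_ext_bound h0 le).
by rewrite (sum_ext_bound hN (ltnW le)).
Qed.

Lemma zero_rep_aux (d : nat -> F) N :
  (forall i, (N <= i)%N -> d i = 0) -> (forall i, in_span i (g i) -> d i = 0) ->
  \sum_(i < N) d i *: g i = 0 -> forall i, d i = 0.
Proof.
elim: N => [|N IH] hN hdep hs.
  by move=> i; apply: hN.
case: (eqVneq (d N) 0) => dN.
  apply: IH => //; last by move: hs; rewrite big_ord_recr /= dN scale0r addr0.
  move=> i; rewrite leq_eqVlt => /orP [/eqP <- //|]; exact: hN.
exfalso; have dN' := dN; move/eqP: dN; apply; apply: hdep.
exists (fun j => - (d N)^-1 * d j).
move: hs; rewrite big_ord_recr /= => /eqP; rewrite addrC addr_eq0 => /eqP hs.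
have -> : g N = (d N)^-1 *: (d N *: g N) by rewrite scalerA mulVf ?scale1r.
rewrite hs scalerN scaler_sumr -sumrN; apply: eq_bigr => i _.
by rewrite scalerA mulNr scaleNr.
Qed.

Lemma rep_unique h h' x : rep h x -> rep h' x -> forall i, h i = h' i.
Proof.
move=> r r' i; apply/eqP; rewrite -subr_eq0; apply/eqP; move: i.
have [_ [N [hN _]]] := r; have [_ [N' [hN' _]]] := r'.
have bd : forall i, (maxn N N' <= i)%N -> h i - h' i = 0.
  by move=> i; rewrite geq_max => /andP [a b]; rewrite hN // hN' // subrr.
apply: (zero_rep_aux bd).
  by move=> i hi; rewrite r.1 // r'.1 // subrr.
have e1 := rep_bound r (N:=maxn N N').
have e2 := rep_bound r' (N:=maxn N N').
under eq_bigr => i _ do rewrite scalerBl.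
rewrite sumrB -e1 -?e2 ?subrr //.
- by move=> i; rewrite geq_max => /andP [_ b]; rewrite hN'.
- by move=> i; rewrite geq_max => /andP [a _]; rewrite hN.
Qed.

Lemma rep0 : rep (fun _ => 0) 0.
Proof. split=> //; exists 0%N; split=> //; by rewrite big_ord0. Qed.

Lemma rep_lin a h x h' y : rep h x -> rep h' y ->
  rep (fun i => a * h i + h' i) (a *: x + y).
Proof.
move=> r r'; split.
  by move=> i hi; rewrite r.1 // r'.1 // mulr0 addr0.
have [_ [N [hN _]]] := r; have [_ [N' [hN' _]]] := r'.
exists (maxn N N'); split.
  by move=> i; rewrite geq_max => /andP [u v]; rewrite hN // hN' // mulr0 addr0.
rewrite (rep_bound r (N:=maxn N N')) ?(rep_bound r' (N:=maxn N N')).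
- rewrite scaler_sumr -big_split; apply: eq_bigr => i _.
  by rewrite scalerDl scalerA.
- by move=> i; rewrite geq_max => /andP [_ b]; rewrite hN'.
- by move=> i; rewrite geq_max => /andP [u _]; rewrite hN.
Qed.

Lemma rep_span m (a : nat -> F) : (forall j, (j < m)%N -> exists h, rep h (g j)) ->
  exists h, rep h (\sum_(j < m) a j *: g j).
Proof.
elim: m => [|m IH] H; first by exists (fun _ => 0); rewrite big_ord0; exact: rep0.
have [h1 r1] := IH (fun j hj => H j (leq_trans hj (leqnSn m))).
have [h2 r2] := H m (leqnn _).
exists (fun i => a m * h2 i + h1 i).
rewrite big_ord_recr /= addrC; exact: rep_lin.
Qed.

Lemma rep_exists_g m : exists h, rep h (g m).
Proof.
elim/ltn_ind: m => m IH.
case: (classic (in_span m (g m))) => [[a ->]|nd].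
  exact: rep_span.
exists (fun i => if i == m then 1 else 0); split.
  by move=> i; case: eqP => [-> //|//].
exists m.+1; split.
  by move=> i hi; case: eqP => // e; move: hi; rewrite e ltnn.
rewrite big_ord_recr /= eqxx scale1r big1 ?add0r // => i _.
by rewrite (ltn_eqF (ltn_ord i)) scale0r.
Qed.


End Coords.

Section Main.
Variables (F : fieldType) (E : lmodType F) (g : nat -> E).
Hypothesis gsurj : forall x, exists m, g m = x.

Lemma rep_exists x : exists h, rep g h x.
Proof. by have [m <-] := gsurj x; exact: rep_exists_g. Qed.

Definition c (x : E) : nat -> F :=
  proj1_sig (constructive_indefinite_description _ (rep_exists x)).

Lemma c_rep x : rep g (c x) x.
Proof. exact: proj2_sig (constructive_indefinite_description _ (rep_exists x)). Qed.

Lemma c_lin a x y i : c (a *: x + y) i = a * c x i + c y i.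
Proof.
by rewrite (rep_unique (c_rep (a *: x + y)) (rep_lin a (c_rep x) (c_rep y))).
Qed.

Lemma c0 i : c 0 i = 0.
Proof. by rewrite (rep_unique (c_rep 0) (rep0 g)). Qed.

Lemma cD x y i : c (x + y) i = c x i + c y i.
Proof. by rewrite -{1}[x]scale1r c_lin mul1r. Qed.

Lemma cZ a x i : c (a *: x) i = a * c x i.
Proof. by rewrite -[a *: x]addr0 c_lin c0 addr0. Qed.

Lemma c_inj x : (forall i, c x i = 0) -> x = 0.
Proof.
by move=> H; rewrite (rep_bound (c_rep x) (N := 0%N)) ?big_ord0.
Qed.

Lemma c_bound x : exists N, forall i, (N <= i)%N -> c x i = 0.
Proof. by have [_ [N [hN _]]] := c_rep x; exists N. Qed.

Definition bnd x : nat := proj1_sig (constructive_indefinite_description _ (c_bound x)).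
Lemma bndP x : forall i, (bnd x <= i)%N -> c x i = 0.
Proof. exact: proj2_sig (constructive_indefinite_description _ (c_bound x)). Qed.

Definition Lh (h : nat -> F) (s : seq nat) : seq F := [seq h i | i <- s & h i != 0].
Definition L x := Lh (c x) (iota 0 (bnd x)).

Lemma Lh_cat h s1 s2 : Lh h (s1 ++ s2) = Lh h s1 ++ Lh h s2.
Proof. by rewrite /Lh filter_cat map_cat. Qed.

Lemma Lh_eq_in h h' (s : seq nat) : {in s, h =1 h'} -> Lh h s = Lh h' s.
Proof.
move=> H; rewrite /Lh (eq_in_filter (a2 := fun i => h' i != 0)); last by move=> i /H ->.
apply/eq_in_map => i; rewrite mem_filter => /andP [_ /H //].
Qed.

Lemma Lh_zero h (s : seq nat) : {in s, forall i, h i = 0} -> Lh h s = [::].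
Proof.
move=> H; rewrite /Lh (eq_in_filter (a2 := pred0)) ?filter_pred0 //.
by move=> i /H ->; rewrite eqxx.
Qed.

Lemma Lh_scale mu h s : mu != 0 -> Lh (fun i => mu * h i) s = map (fun a => mu * a) (Lh h s).
Proof.
move=> mu0; rewrite /Lh -map_comp (eq_filter (a2 := fun i => h i != 0)) //.
by move=> i /=; rewrite mulf_eq0 (negbTE mu0).
Qed.

Lemma Lh_all h s : all (fun a => a != 0) (Lh h s).
Proof. by rewrite /Lh all_map; apply/allP => i; rewrite mem_filter => /andP []. Qed.

Lemma Lh_iota h N N' : (forall i, (N <= i)%N -> h i = 0) -> (N <= N')%N ->
  Lh h (iota 0 N') = Lh h (iota 0 N).
Proof.
move=> hN le; rewrite -(subnKC le) iotaD Lh_cat (@Lh_zero h (iota (0 + N) (N' - N))) ?cats0 //.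
by move=> i; rewrite mem_iota add0n => /andP [a _]; apply: hN.
Qed.

Lemma L_bound x N : (forall i, (N <= i)%N -> c x i = 0) -> L x = Lh (c x) (iota 0 N).
Proof.
move=> hN; rewrite /L; case: (leqP N (bnd x)) => le.
  exact: Lh_iota.
by rewrite (Lh_iota (@bndP x) (ltnW le)).
Qed.

Lemma L_all x : all (fun a => a != 0) (L x).
Proof. exact: Lh_all. Qed.

Lemma L_nil x : x <> 0 -> L x <> [::].
Proof.
move=> x0 Lx; apply: x0; apply: c_inj => i.
case: (leqP (bnd x) i) => hi; first exact: bndP.
apply/eqP; apply: contraT => ci.
have : c x i \in L x by rewrite /L /Lh map_f // mem_filter ci mem_iota.
by rewrite Lx.
Qed.

Lemma L_block x w M mu : mu != 0 -> (forall i, (M <= i)%N -> c x i = 0) ->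
  (forall i, (i < M)%N -> c w i = 0) ->
  L (x + mu *: w) = L x ++ map (fun a => mu * a) (L w).
Proof.
move=> mu0 hx hw.
have [Nw hNw] := c_bound w.
set N := maxn M Nw.
have bN : forall i, (N <= i)%N -> c (x + mu *: w) i = 0.
  move=> i; rewrite geq_max => /andP [a b].
  by rewrite addrC c_lin hx // hNw // mulr0 addr0.
rewrite (L_bound bN) (L_bound (N:=M) hx) (L_bound (N:=N) (x:=w)); last first.
  by move=> i; rewrite geq_max => /andP [a b]; rewrite hNw.
have le : (M <= N)%N by rewrite leq_maxl.
rewrite -(subnKC le) !iotaD !Lh_cat add0n.
rewrite (@Lh_zero (c w) (iota 0 M)) /=; last first.
  by move=> i; rewrite mem_iota => /andP [_ b]; apply: hw.
congr (_ ++ _).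
  apply: Lh_eq_in => i; rewrite mem_iota => /andP [_ b].
  by rewrite addrC c_lin hw // mulr0 add0r.
rewrite -Lh_scale //; apply: Lh_eq_in => i; rewrite mem_iota => /andP [a _].
by rewrite addrC c_lin hx // addr0.
Qed.

End Main.

Fixpoint chg (F : eqType) (s : seq F) : nat :=
  match s with
  | a :: ((b :: _) as t) => ((a != b) + chg t)%N
  | _ => 0%N
  end.

Lemma chg_cons (F : eqType) (a b : F) s : chg (a :: b :: s) = ((a != b) + chg (b :: s))%N.
Proof. by []. Qed.

Lemma chg_cat (F : eqType) (a b : F) s t :
  chg ((a :: s) ++ (b :: t)) = (chg (a :: s) + (last a s != b) + chg (b :: t))%N.
Proof.
elim: s a => [|a' s IH] a //.
rewrite cat_cons [(a' :: s) ++ _]cat_cons chg_cons -cat_cons IH chg_cons /=.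
by rewrite !addnA.
Qed.

Lemma chg_map (F : eqType) (f : F -> F) s : injective f -> chg (map f s) = chg s.
Proof.
move=> fi; elim: s => [//|a s IH] /=.
by case: s IH => [//|b s] /= ->; rewrite (inj_eq fi).
Qed.

Section Sub.
Variables (F : fieldType) (E : lmodType F) (g : nat -> E).
Hypothesis gsurj : forall x, exists m, g m = x.
Variables (V : E -> Prop) (hsub : is_subspace V) (hinf : inf_dim V).

Lemma c_sum n (d : 'I_n -> F) (v : 'I_n -> E) i :
  c gsurj (\sum_(j < n) d j *: v j) i = \sum_(j < n) d j * c gsurj (v j) i.
Proof.
apply: (big_rec2 (fun y1 y2 => c gsurj y1 i = y2)) => [|j y1 y2 _ <-].
  exact: c0.
by rewrite c_lin.
Qed.

Lemma sub_sum n (d : 'I_n -> F) (v : 'I_n -> E) :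
  (forall j, V (v j)) -> V (\sum_(j < n) d j *: v j).
Proof.
have [V0 VD VZ] := hsub => Vv.
apply: (big_rec (fun y => V y)) => // j y _ Vy.
by apply: VD => //; apply: VZ.
Qed.

Lemma far N : exists w, V w /\ w <> 0 /\ forall i, (i < N)%N -> c gsurj w i = 0.
Proof.
have [v [Vv ind]] := hinf N.+1.
pose M : 'M[F]_(N.+1, N) := \matrix_(j < N.+1, i < N) c gsurj (v j) i.
have K0 : kermx M != 0.
  rewrite kermx_eq0 /row_free; apply/negP => /eqP hr.
  by have := rank_leq_col M; rewrite hr ltnn.
have [j0 [i0 hK]] : exists j0 i0, kermx M j0 i0 != 0.
  apply: NNPP => hn; move/negP: K0; apply; apply/eqP/matrixP => j i.
  rewrite [RHS]mxE; apply/eqP; apply: contraT => hji; exfalso; apply: hn; exists j, i; exact: hji.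
pose d j := kermx M j0 j.
exists (\sum_(j < N.+1) d j *: v j); split; first exact: sub_sum.
split.
  move=> w0; move/eqP: hK; apply; exact: ind w0 i0.
move=> i hi; rewrite c_sum.
have := mulmx_ker M; move/matrixP => /(_ j0 (Ordinal hi)).
rewrite [LHS]mxE [RHS]mxE => e; apply: etrans e; apply: eq_bigr => j _; by rewrite [M _ _]mxE.
Qed.

Lemma L0 : L gsurj 0 = [::].
Proof. by rewrite /L Lh_zero // => i _; rewrite c0. Qed.

Variable a0 : F.
Hypotheses (a00 : a0 != 0) (a01 : a0 != 1).

Lemma grow m : exists S M, forall r, (r <= m)%N -> exists x, V x /\ x <> 0 /\
  (forall i, (M <= i)%N -> c gsurj x i = 0) /\ chg (L gsurj x) = (S + r)%N.
Proof.
elim: m => [|m [S [M H]]].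
  have [w [Vw [w0 _]]] := far 0.
  exists (chg (L gsurj w)), (bnd gsurj w) => r; rewrite leqn0 => /eqP ->.
  exists w; split=> //; split=> //; split; [exact: bndP | by rewrite addn0].
have [w [Vw [w0 wlow]]] := far M.
have [Mw hMw] := c_bound gsurj w.
have := @L_nil _ _ _ gsurj w w0; case Lw: (L gsurj w) => [//|b t] _.
have b0 : b != 0 by have := L_all gsurj w; rewrite Lw => /andP [].
have ext : forall x (e : F), V x -> x <> 0 -> (forall i, (M <= i)%N -> c gsurj x i = 0) -> e != 0 ->
    exists y, V y /\ y <> 0 /\ (forall i, (maxn M Mw <= i)%N -> c gsurj y i = 0) /\
    chg (L gsurj y) = (chg (L gsurj x) + (e != 1%R :> F) + chg (L gsurj w))%N.
  move=> x e Vx x0 xM e0.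
  have := @L_nil _ _ _ gsurj x x0; case Lx: (L gsurj x) => [//|a s] _.
  set l := last a s.
  have l0 : l != 0.
    have := L_all gsurj x; rewrite Lx => /allP; apply; exact: mem_last.
  pose mu := e * l / b.
  have mu0 : mu != 0 by rewrite /mu !mulf_neq0 // invr_eq0.
  have mub : mu * b = e * l by rewrite /mu divfK.
  have [V0 VD VZ] := hsub.
  exists (x + mu *: w); split; first by apply: VD => //; apply: VZ.
  have LB := L_block mu0 xM wlow.
  split.
    move=> y0; have := L0; rewrite -{1}y0 LB Lx /= => HH; discriminate HH.
  split.
    move=> i; rewrite geq_max => /andP [u u'].
    by rewrite addrC c_lin xM // hMw // mulr0 add0r.
  rewrite LB Lx Lw map_cons chg_cat -map_cons (chg_map _ (mulfI mu0)) -/l mub.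
  congr (_ + _ + _)%N.
  rewrite -{1}[l]mul1r (inj_eq (mulIf l0)) eq_sym.
  by [].
exists (S + chg (L gsurj w))%N, (maxn M Mw) => r hr.
case: (leqP r m) => hrm.
  have [x [Vx [x0 [xM cx]]]] := H r hrm.
  have [y [Vy [y0 [yM cy]]]] := ext x 1 Vx x0 xM (oner_neq0 _).
  exists y; do 3 (split => //); rewrite cy cx eqxx; lia.
have er : r = m.+1 by apply/eqP; rewrite eqn_leq hr hrm.
have [x [Vx [x0 [xM cx]]]] := H m (leqnn m).
have [y [Vy [y0 [yM cy]]]] := ext x a0 Vx x0 xM a00.
exists y; do 3 (split => //); rewrite cy cx a01 er; lia.
Qed.

End Sub.

Lemma arith k n : exists r, (r < 2 ^ n.+1)%N /\ logn 2 (k + r) = n.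
Proof.
have P0 : (0 < 2 ^ n)%N by rewrite expn_gt0.
have eK : (2 ^ n.+1 = 2 ^ n * 2)%N by rewrite expnSr.
set P := (2 ^ n)%N in P0 eK *; rewrite eK.
have hl : forall q, logn 2 (P * q.*2.+1) = n.
  by move=> q; rewrite mulnC logn_Gauss ?pfactorK // coprime2n /= odd_double.
have kd := divn_eq k (P * 2).
have kb : (k %% (P * 2) < P * 2)%N by rewrite ltn_pmod // muln_gt0 P0.
set a := (k %/ (P * 2))%N in kd; set b := (k %% (P * 2))%N in kd kb *.
case: (leqP b P) => hb.
  exists (P - b)%N; split; first by lia.
  rewrite -(hl a); congr logn; rewrite kd -!muln2. nia.
exists (P * 2 + P - b)%N; split; first by lia.
rewrite -(hl a.+1); congr logn; rewrite kd -!muln2. nia.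
Qed.

Theorem lemma8p4 (F : fieldType) (E : lmodType F)
  (cntF : countable_type F) (cntE : countable_type E)
  (dimE : inf_dim (fun _ : E => True))
  (F_gt2 : exists a : F, a != 0 /\ a != 1) :
  exists A : nat -> E -> Prop,
    (forall n, asymptotic (A n)) /\
    (forall m n (x : E), m <> n -> A m x -> A n x -> False).
Proof.
have [f finj] := cntE.
have [a0 [a00 a01]] := F_gt2.
pose g (n : nat) : E := match excluded_middle_informative (exists x, f x = n) with
  | left H => proj1_sig (constructive_indefinite_description _ H)
  | right _ => 0 end.
have gsurj : forall x, exists m, g m = x.
  move=> x; exists (f x); rewrite /g.
  case: excluded_middle_informative => [H|[]]; last by exists x.
  apply: finj; exact: proj2_sig (constructive_indefinite_description _ H).
exists (fun n x => x <> 0 /\ logn 2 (chg (L gsurj x)).+1 = n); split; last first.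
  by move=> m n x mn [_ e1] [_ e2]; apply: mn; rewrite -e1 -e2.
move=> n; split; first by move=> x [].
move=> V hsub hinf.
have [S [M H]] := grow gsurj hsub hinf a00 a01 (2 ^ n.+1).-1.
have [r [hr hl]] := arith S.+1 n.
have [x [Vx [x0 [_ cx]]]] := H r (ltac:(lia)).
by exists x; split=> //; split=> //; rewrite cx -addSn.
Qed.
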